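(* Let $\{Y_k\}_{k\ge 0}$ be a real-valued discrete stochastic process adapted to a filtration $\{\mathcal{F}_k\}_{k \ge 0}$, where $\mathcal{F}_0$ is the trivial $\sigma$-algebra. Suppose that for some $a, b, \eta, \rho, D \in \mathbb{R}$ with $a < b$, $\eta > 0$, $0 < \rho < 1$ and $D \ge 1$: (C0) $Y_0 \in [0,a)$ almost surely; (C1) $\mathbb{E}[e^{\eta(Y_{k+1} - Y_k)}\mathbb{1}_{\{a \le Y_k < b\}} \mid \mathcal{F}_k] \le \rho$ almost surely for every $k \ge 1$; (C2) $\mathbb{E}[e^{\eta(Y_{k+1} - a)}\mathbb{1}_{\{Y_k < a\}} \mid \mathcal{F}_k] \le D$ almost surely for every $k \ge 1$. Let $\tau_b := \min\{j : Y_j \ge b\}$. Then for every $k \ge 1$, $$\mathbb{E}\big[e^{\eta Y_k}\mathbb{1}_{\{\tau_b > k-1\}}\big] \le e^{\eta a}\Big(\rho^k + \frac{1-\rho^k}{1-\rho} D\Big).$$ *)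

(* Defs.v *)
From HB Require Import structures.
From mathcomp Require Import all_boot all_order all_algebra.
From mathcomp Require Import all_classical all_reals all_analysis measurable_realfun.
Set Implicit Arguments. Unset Strict Implicit. Unset Printing Implicit Defensive.
Import Order.TTheory GRing.Theory Num.Theory.
Local Open Scope classical_set_scope.
Local Open Scope ring_scope.

Section defs.
Context {d : measure_display} {T : measurableType d} {R : realType}.

Definition sub_sigma_algebra (G : set (set T)) : Prop :=
  sigma_algebra setT G /\ G `<=` measurable.

Definition G_measurable (G : set (set T)) (f : T -> R) : Prop :=
  forall B : set R, measurable B -> G (f @^-1` B).

Definition G_emeasurable (G : set (set T)) (g : T -> \bar R) : Prop :=
  forall B : set (\bar R), measurable B -> G (g @^-1` B).

Definition filtration (F : nat -> set (set T)) : Prop :=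
  (forall k, sub_sigma_algebra (F k)) /\
  (forall n m, (n <= m)%N -> F n `<=` F m).

Definition trivial_sigma : set (set T) := [set A | A = set0 \/ A = setT].

Definition adapted (F : nat -> set (set T)) (Y : nat -> T -> R) : Prop :=
  forall k, G_measurable (F k) (Y k).

(* g is a version of the conditional expectation E[X | G] of the nonnegative
   random variable X (values in [0, +oo]):  g is G-measurable, nonnegative,
   and  \int_A g dP = \int_A X dP  for every A in G. *)
Definition cond_exp_version (P : probability T R) (G : set (set T))
    (X : T -> \bar R) (g : T -> \bar R) : Prop :=
  [/\ G_emeasurable G g, (forall x, (0 <= g x)%E) &
      forall A, G A -> (\int[P]_(x in A) g x = \int[P]_(x in A) X x)%E].

Definition cond_exp_le (P : probability T R) (G : set (set T))
    (X : T -> \bar R) (c : R) : Prop :=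
  exists g, cond_exp_version P G X g /\ {ae P, forall x, (g x <= c%:E)%E}.

(* the event {tau_b > m}, where tau_b := min {j | Y_j >= b} (min of the
   empty set = +oo): no index j <= m has Y_j >= b *)
Definition tau_gt (Y : nat -> T -> R) (b : R) (m : nat) : set T :=
  [set x | forall j, (j <= m)%N -> Y j x < b].

End defs.

(* Main.v *)
Require Import Defs.
From HB Require Import structures.
From mathcomp Require Import all_boot all_order all_algebra.
From mathcomp Require Import all_classical all_reals all_analysis measurable_realfun.
From mathcomp Require Import ring.
Import Order.TTheory GRing.Theory Num.Theory.
Local Open Scope classical_set_scope.
Local Open Scope ring_scope.

Section key.
Context d (T : measurableType d) (R : realType) (P : probability T R)
  (G : set (set T)).
Hypothesis sG : Defs.sub_sigma_algebra G.
Variables (X : T -> R) (c : R).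
Hypothesis mX : measurable_fun setT X.
Hypothesis X0 : forall x, 0 <= X x.
Hypothesis c0 : 0 <= c.
Hypothesis HX : forall A, G A ->
  (\int[P]_(x in A) (X x)%:E <= c%:E * P A)%E.

Definition Qs (s : T -> R) := [/\ measurable_fun setT s, forall x, 0 <= s x &
  (\int[P]_x (s x * X x)%:E <= c%:E * \int[P]_x (s x)%:E)%E].

Lemma Qs0 : Qs (fun _ => 0).
Proof.
split => //.
under eq_integral do rewrite mul0r.
by rewrite integral0 mule0.
Qed.

Lemma QsD s1 s2 : Qs s1 -> Qs s2 -> Qs (fun x => s1 x + s2 x).
Proof.
move=> [m1 p1 i1] [m2 p2 i2]; split.
- exact: measurable_funD.
- by move=> x; rewrite addr_ge0.
have mm1 : measurable_fun setT (fun x => s1 x * X x) by exact: measurable_funM.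
have mm2 : measurable_fun setT (fun x => s2 x * X x) by exact: measurable_funM.
under eq_integral do rewrite mulrDl EFinD.
rewrite ge0_integralD //; last 4 first.
- by move=> x _; rewrite lee_fin mulr_ge0.
- exact/measurable_EFinP.
- by move=> x _; rewrite lee_fin mulr_ge0.
- exact/measurable_EFinP.
under [X in (_ <= _ * X)%E]eq_integral do rewrite EFinD.
rewrite ge0_integralD //; last 4 first.
- by move=> x _; rewrite lee_fin.
- exact/measurable_EFinP.
- by move=> x _; rewrite lee_fin.
- exact/measurable_EFinP.
rewrite muleDr//; last by rewrite ge0_adde_def// inE integral_ge0// => x _; rewrite lee_fin.
exact: leeD.
Qed.

Lemma Qsind a A : 0 <= a -> G A -> Qs (fun x => a * \1_A x).
Proof.
move=> a0 GA; have mA : measurable A by exact: sG.2.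
split.
- by apply: measurable_funM; [exact: measurable_cst|exact: measurable_indic].
- by move=> x; rewrite mulr_ge0.
under eq_integral do rewrite -mulrA EFinM.
rewrite ge0_integralZl_EFin //; last 2 first.
- by move=> x _; rewrite lee_fin mulr_ge0.
- by apply/measurable_EFinP; apply: measurable_funM => //; exact: measurable_indic.
under [X in (_ <= _ * X)%E]eq_integral do rewrite EFinM.
rewrite ge0_integralZl_EFin //.
rewrite integral_indic // setIT.
have -> : (\int[P]_x ((\1_A x * X x)%:E) = \int[P]_(x in A) (X x)%:E)%E.
  rewrite [RHS]integral_mkcond; apply: eq_integral => x _.
  by rewrite epatch_indic /= EFinM muleC.
rewrite muleCA; apply: lee_wpmul2l; first by rewrite lee_fin.
exact: HX.
by apply/measurable_EFinP; exact: measurable_indic.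
Qed.

Lemma QsSum (F : nat -> T -> R) n : (forall k, Qs (F k)) ->
  Qs (fun x => \sum_(0 <= k < n) F k x).
Proof.
move=> QF; elim: n => [|n IH].
  have -> : (fun x => \sum_(0 <= k < 0) F k x) = (fun _ => 0).
    by apply/funext => x; rewrite big_geq.
  exact: Qs0.
have -> : (fun x => \sum_(0 <= k < n.+1) F k x) =
  (fun x => \sum_(0 <= k < n) F k x + F n x).
  by apply/funext => x; rewrite big_nat_recr.
exact: QsD.
Qed.

Lemma G_meas_measurable (h : T -> R) : G_measurable G h -> measurable_fun setT h.
Proof. by move=> Gh _ B mB; rewrite setTI; apply: sG.2; exact: Gh. Qed.

Lemma key (h : T -> R) : G_measurable G h -> (forall x, 0 <= h x) ->
  (\int[P]_x (h x * X x)%:E <= c%:E * \int[P]_x (h x)%:E)%E.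
Proof.
move=> Gh h0.
have mh := @G_meas_measurable h Gh.
have G0 : G set0 by case: sG => -[].
set f := EFin \o h.
have f0 : forall x, setT x -> (0 <= f x)%E by move=> x _; rewrite lee_fin.
have Qa n : Qs (approx setT f n).
  have -> : approx setT f n = (fun x => \sum_(0 <= k < n * 2 ^ n)
      (fun k x => k%:R * 2 ^- n * \1_(dyadic_approx setT f n k) x) k x
      + n%:R * \1_(integer_approx setT f n) x).
    by apply/funext => x; rewrite /approx big_mkord.
  apply: QsD; first apply: QsSum => k; apply: Qsind.
  - by rewrite mulr_ge0.
  - rewrite /dyadic_approx; case: ifP => _ //.
    have -> : setT `&` [set x | f x \in EFin @` [set` dyadic_itv R n k]] =
              h @^-1` [set` dyadic_itv R n k].
      apply/seteqP; split => x /=.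
        by move=> [_]; rewrite inE => -[r rI [<-]].
      by move=> hx; split => //; rewrite inE; exists (h x).
    by apply: Gh; exact: measurable_itv.
  - by [].
  - have -> : integer_approx setT f n = h @^-1` `[n%:R, +oo[.
      rewrite /integer_approx; apply/seteqP; split => x /=.
        by move=> [_]; rewrite in_itv /= andbT.
      by rewrite in_itv /= andbT.
    by apply: Gh; exact: measurable_itv.
pose g n x := ((approx setT f n x) * X x)%:E.
have mg n : measurable_fun setT (g n).
  by case: (Qa n) => ma _ _; apply/measurable_EFinP; exact: measurable_funM.
have g0 n x : setT x -> (0 <= g n x)%E.
  by case: (Qa n) => _ p _ _; rewrite lee_fin mulr_ge0.
have ndg x : setT x -> {homo g^~ x : n m / (n <= m)%N >-> (n <= m)%E}.
  move=> _ n m nm; rewrite lee_fin ler_wpM2r //.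
  exact/lefP/nd_approx.
have lim_g x : limn (g^~ x) = (h x * X x)%:E.
  apply/cvg_lim => //; apply: cvg_EFin; first exact: nearW.
  apply: cvgMr_tmp; exact: (cvg_approx f0 Logic.I (ltry _)).
have cvgI := @cvg_monotone_convergence _ _ _ P _ measurableT _ mg g0 ndg.
have -> : (\int[P]_x (h x * X x)%:E =
    \int[P]_(x in setT) (fun x0 => limn (g^~ x0)) x)%E.
  by apply: eq_integral => x _; rewrite lim_g.
rewrite -(cvg_lim _ cvgI) //.
apply: lime_le; first by apply/cvg_ex; eexists; exact: cvgI.
apply: nearW => n; case: (Qa n) => ma pa H; apply: le_trans H _.
apply: lee_wpmul2l; first by rewrite lee_fin.
apply: ge0_le_integral => //.
all: first [ by move=> x _; rewrite lee_fin | exact/measurable_EFinP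
  | by move=> x _; exact: le_approx | idtac].
Qed.

End key.

Section gsig.
Context {d} {T : measurableType d} {R : realType} {G : set (set T)}.
Hypothesis sG : Defs.sub_sigma_algebra G.
Local Notation TG := (g_sigma_algebraType G).

Lemma TGE (A : set T) : measurable (A : set TG) <-> G A.
Proof. by rewrite /= (measurable_g_measurableTypeE sG.1). Qed.

Lemma TGfun (h : T -> R) : G_measurable G h <-> measurable_fun (setT : set TG) h.
Proof.
split=> H.
  by move=> _ B mB; rewrite setTI; apply/TGE; exact: H.
by move=> B mB; apply/TGE; have := H measurableT B mB; rewrite setTI.
Qed.

Lemma cond_le_int (P : probability T R) (X : T -> R) c : 0 <= c ->
  cond_exp_le P G (fun x => (X x)%:E) c ->
  forall A, G A -> (\int[P]_(x in A) (X x)%:E <= c%:E * P A)%E.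
Proof.
move=> c0 [g [[Gg g0 Hg] ae]] A GA.
have mA : measurable A := sG.2 _ GA.
rewrite -Hg //.
have mg : measurable_fun setT g.
  by move=> _ B mB; rewrite setTI; apply: sG.2; exact: Gg.
rewrite -(integral_cst P mA).
apply: ae_ge0_le_integral => //.
all: first [exact: measurable_funS mg | by move=> x _; rewrite /= lee_fin
  | by apply: filterS ae => x H _; exact: H | idtac].
Qed.
End gsig.

Lemma indic_le1 {T} {R : numDomainType} (A : set T) x : \1_A x <= 1 :> R.
Proof. by rewrite indicE; case: (x \in A). Qed.

Lemma indic_sub {T} {R : numDomainType} (A B : set T) x : A `<=` B ->
  \1_A x <= \1_B x :> R.
Proof.
move=> AB; rewrite !indicE; case: (boolP (x \in A)) => // /set_mem /AB xB.
by rewrite mem_set.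
Qed.

Theorem theorem3p1 (d : measure_display) (T : measurableType d) (R : realType)
  (P : probability T R) (F : nat -> set (set T)) (Y : nat -> T -> R)
  (a b eta rho D : R) :
  filtration F -> F 0%N = trivial_sigma -> adapted F Y ->
  a < b -> 0 < eta -> 0 < rho < 1 -> 1 <= D ->
  (* (C0) *)
  {ae P, forall x, 0 <= Y 0%N x < a} ->
  (* (C1) *)
  (forall k : nat, cond_exp_le P (F k)
     (fun x => (expR (eta * (Y k.+1 x - Y k x)) *
                \1_[set y | a <= Y k y < b] x)%:E) rho) ->
  (* (C2) *)
  (forall k : nat, cond_exp_le P (F k)
     (fun x => (expR (eta * (Y k.+1 x - a)) *
                \1_[set y | Y k y < a] x)%:E) D) ->
  forall k : nat, (1 <= k)%N ->
    (\int[P]_x (expR (eta * Y k x) * \1_(tau_gt Y b k.-1) x)%:E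
     <= (expR (eta * a) *
         (rho ^+ k + (1 - rho ^+ k) / (1 - rho) * D))%:E)%E.
Proof.
move=> [sF mono] F0 adY ab eta0 /andP[rho0 rho1] D1 C0 C1 C2 k _.
have YF j m : (j <= m)%N -> G_measurable (F m) (Y j).
  by move=> jm B mB; apply: (mono j m jm); exact: adY.
have Yamb j : measurable_fun setT (Y j) := @G_meas_measurable _ _ _ _ (sF j) _ (adY j).
have SI m : F m [set y | a <= Y m y < b].
  have -> : [set y | a <= Y m y < b] = Y m @^-1` `[a, b[.
    by apply/seteqP; split => x /=; rewrite in_itv.
  by apply: adY; exact: measurable_itv.
have SL m : F m [set y | Y m y < a].
  have -> : [set y | Y m y < a] = Y m @^-1` `]-oo, a[.
    by apply/seteqP; split => x /=; rewrite in_itv.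
  by apply: adY; exact: measurable_itv.
have ST m : F m (tau_gt Y b m).
  elim: m => [|m IH].
    have -> : tau_gt Y b 0 = Y 0%N @^-1` `]-oo, b[.
      apply/seteqP; split => x /=.
        by move=> H; rewrite in_itv /=; exact: H.
      by rewrite in_itv /= => H j; rewrite leqn0 => /eqP ->.
    by apply: adY; exact: measurable_itv.
  have -> : tau_gt Y b m.+1 = tau_gt Y b m `&` Y m.+1 @^-1` `]-oo, b[.
    apply/seteqP; split => x /=.
      move=> H; split; first by move=> j jm; apply: H; rewrite (leq_trans jm).
      by rewrite in_itv /=; exact: H.
    move=> [H1]; rewrite in_itv /= => H2 j.
    by rewrite leq_eqVlt ltnS => /orP[/eqP -> //|]; exact: H1.
  apply/(TGE (sF m.+1)); apply: measurableI; apply/(TGE (sF m.+1)).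
    exact: (mono m m.+1 (leqnSn m)).
  by apply: adY; exact: measurable_itv.
have Fm A m : F m A -> measurable A := fun H => (sF m).2 _ H.
have ea0 : 0 <= expR (eta * a) by exact: expR_ge0.
pose J k := (\int[P]_x (expR (eta * Y k x) * \1_(tau_gt Y b k.-1) x)%:E)%E.
have mJ j m : measurable_fun setT
    (fun x => (expR (eta * Y j x) * \1_(tau_gt Y b m) x)).
  apply: measurable_funM; last exact/measurable_indic/(Fm _ m)/ST.
  apply: measurableT_comp; first exact: measurable_expR.
  by apply: measurable_funM => //; exact: measurable_cst.
have base : (J 0%N <= (expR (eta * a))%:E)%E.
  rewrite /J /=.
  apply: (@le_trans _ _ (\int[P]_x (cst (expR (eta * a))%:E) x)%E).
    apply: ae_ge0_le_integral => //.
    all: first [ by move=> x _; rewrite lee_fin mulr_ge0 // expR_ge0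
       | exact/measurable_EFinP | by move=> x _; rewrite lee_fin
       | idtac].
    apply: filterS C0 => x /andP[_ Y0a] _; rewrite lee_fin /=.
    apply: le_trans (ler_piMr (expR_ge0 _) (indic_le1 _ _)) _.
    by rewrite ler_expR ler_pM2l // ltW.
  rewrite integral_cst // -[X in (_ <= X)%E]mule1; apply: lee_wpmul2l; first by rewrite lee_fin.
  exact: probability_le1.
have ind0 (A : set T) x : 0 <= \1_A x :> R by rewrite indicE ler0n.
have step j : (J j.+1 <= rho%:E * J j + (D * expR (eta * a))%:E)%E.
  pose h x := expR (eta * Y j x) * \1_(tau_gt Y b j) x *
              \1_[set y | a <= Y j y < b] x.
  pose X1 x := expR (eta * (Y j.+1 x - Y j x)) * \1_[set y | a <= Y j y < b] x.
  pose X2 x := expR (eta * (Y j.+1 x - a)) * \1_[set y | Y j y < a] x.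
  have mX1 : measurable_fun setT X1.
    apply: measurable_funM; last exact/measurable_indic/(Fm _ j)/SI.
    apply: measurableT_comp; first exact: measurable_expR.
    apply: measurable_funM; first exact: measurable_cst.
    exact: measurable_funB.
  have mX2 : measurable_fun setT X2.
    apply: measurable_funM; last exact/measurable_indic/(Fm _ j)/SL.
    apply: measurableT_comp; first exact: measurable_expR.
    apply: measurable_funM; first exact: measurable_cst.
    apply: measurable_funB => //; exact: measurable_cst.
  have X10 x : 0 <= X1 x by rewrite mulr_ge0 // expR_ge0.
  have X20 x : 0 <= X2 x by rewrite mulr_ge0 // expR_ge0.
  have Gh : G_measurable (F j) h.
    apply/(TGfun (sF j)).
    apply: measurable_funM; last exact/measurable_indic/(TGE (sF j))/SI.
    apply: measurable_funM; last exact/measurable_indic/(TGE (sF j))/ST.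
    apply: measurableT_comp; first exact: measurable_expR.
    apply: measurable_funM; first exact: measurable_cst.
    exact/(TGfun (sF j))/adY.
  have mh : measurable_fun setT h := @G_meas_measurable _ _ _ _ (sF j) _ Gh.
  have h0 x : 0 <= h x by rewrite !mulr_ge0 // expR_ge0.
  have Gc : G_measurable (F j) (fun _ : T => expR (eta * a)).
    by apply/(TGfun (sF j)); exact: measurable_cst.
  have K1 := @key _ _ _ P (F j) (sF j) X1 rho mX1 X10 (ltW rho0)
    (@cond_le_int _ _ _ _ (sF j) P X1 rho (ltW rho0) (C1 j)) h Gh h0.
  have K2 := @key _ _ _ P (F j) (sF j) X2 D mX2 X20 (le_trans ler01 D1)
    (@cond_le_int _ _ _ _ (sF j) P X2 D (le_trans ler01 D1) (C2 j))
    (fun _ => expR (eta * a)) Gc (fun _ => ea0).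
  rewrite /J /=.
  apply: (@le_trans _ _ (\int[P]_x ((h x * X1 x)%:E + (expR (eta * a) * X2 x)%:E))%E).
    apply: ge0_le_integral => //.
    - exact/measurable_EFinP/mJ.
    - under eq_fun do rewrite -EFinD.
      by apply/measurable_EFinP; apply: measurable_funD; apply: measurable_funM.
    move=> x _; rewrite -EFinD lee_fin /h /X1 /X2.
    have [xt|xt] := boolP (x \in tau_gt Y b j); last first.
      by rewrite indicE (negbTE xt) mulr0 addr_ge0 // !mulr_ge0 ?expR_ge0 ?ind0.
    have Yjb : Y j x < b by move: xt; rewrite inE => /(_ j (leqnn j)).
    have I0 : \1_(tau_gt Y b j) x = 1 :> R by rewrite indicE xt.
    rewrite I0 !mulr1.
    have [Yja|Yja] := leP a (Y j x).
      have I1 : \1_[set y | a <= Y j y < b] x = 1 :> R.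
        by rewrite indicE mem_set //= Yja Yjb.
      have I2 : \1_[set y | Y j y < a] x = 0 :> R.
        by rewrite indicE memNset //= => H; move: Yja; rewrite leNgt H.
      rewrite I1 I2 !mulr1 !mulr0 addr0 -expRD -mulrDr addrC subrK.
      by [].
    have I1 : \1_[set y | a <= Y j y < b] x = 0 :> R.
      by rewrite indicE memNset //= => /andP[H _]; move: Yja; rewrite ltNge H.
    have I2 : \1_[set y | Y j y < a] x = 1 :> R.
      by rewrite indicE (@mem_set _ [set y | Y j y < a] x Yja).
    rewrite I1 I2 !mulr1 !mulr0 add0r -expRD -mulrDr addrC subrK.
    by [].
  rewrite ge0_integralD //; last 4 first.
  - by move=> x _; rewrite lee_fin mulr_ge0.
  - by apply/measurable_EFinP; apply: measurable_funM.
  - by move=> x _; rewrite lee_fin mulr_ge0.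
  - by apply/measurable_EFinP; apply: measurable_funM => //; exact: measurable_cst.
  apply: leeD.
    apply: le_trans K1 _; apply: lee_wpmul2l; first by rewrite lee_fin ltW.
    apply: ge0_le_integral => //.
    all: first [by move=> x _; rewrite lee_fin | exact/measurable_EFinP
      | exact/measurable_EFinP/mJ | idtac].
    move=> x _; rewrite lee_fin /h -mulrA; apply: ler_wpM2l; first exact: expR_ge0.
    apply: le_trans (ler_piMr (ind0 _ _) (indic_le1 _ _)) _.
    by apply: indic_sub => y Hy i ij; apply: Hy; exact: leq_trans ij (leq_pred j).
  apply: le_trans K2 _.
  have -> : (\int[P]_x (expR (eta * a))%:E =
      \int[P]_x (cst (expR (eta * a))%:E) x)%E by [].
  rewrite integral_cst // EFinM; apply: lee_wpmul2l.
    by rewrite lee_fin (le_trans ler01 D1).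
  rewrite -[X in (_ <= X)%E]mule1; apply: lee_wpmul2l; first by rewrite lee_fin.
  exact: probability_le1.
have main n : (J n <= (expR (eta * a) *
    (rho ^+ n + (1 - rho ^+ n) / (1 - rho) * D))%:E)%E.
  elim: n => [|n IH].
    by rewrite expr0 subrr !mul0r addr0 mulr1.
  apply: le_trans (step n) _.
  have r0 : (0 <= rho%:E)%E by rewrite lee_fin ltW.
  apply: le_trans (leeD (lee_wpmul2l r0 IH) (lexx _)) _.
  rewrite -EFinM -EFinD lee_fin le_eqVlt; apply/orP; left; apply/eqP.
  have r1 : 1 - rho != 0 by rewrite subr_eq0 eq_sym (lt_eqF rho1).
  rewrite exprS; field.
  exact: r1.
exact: main k.
Qed.
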